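(* In the setting below, let $n\in\mathbb{N}$ and let $b\in\operatorname{Mat}_n(D_I)$ satisfy $|b-\mathbb{1}|_t<1$. Then for each $i\in I$ there exist $b_i'\in\operatorname{GL}_n(Q_i')$ and $b_i\in\operatorname{GL}_n(Q_i)$ such that $b=b_i'b_i$.
   Context: Let $K$ be a number field with ring of integers $R$; for $x\in K$ put $\|x\|=\max_{\sigma\in\operatorname{Hom}(K,\mathbb{C})}|\sigma(x)|$, and for a subring $S\subseteq K$ let $S\{t\}=\{\sum_{n\ge0}a_nt^n\in S[[t]]:\limsup_n\|a_n\|^{1/n}\le1\}$. Let $I$ be a finite index set containing the symbol $1$, and for each $i\in I$ let $a_i\in R$ be nonzero and not a unit, with $a_iR+a_jR=R$ for distinct $i,j\in I$. For $J\subseteq I$ let $a_J=\prod_{j\in J}a_j$ ($a_\emptyset=1$), $R_J=R[1/a_J]$, and $D_J=R_J\{t\}$ if $1\notin J$, $D_J=R_J[[t]]$ if $1\in J$; all are subrings of $D_I=R_I[[t]]$. For $i\in I$ put $D_i=D_{I\setminus\{i\}}$, $Q=\operatorname{Quot}(D_I)$, $Q_i=\operatorname{Quot}(D_i)\subseteq Q$ and $Q_i'=\bigcap_{j\in I,j\ne i}Q_j$. $|\cdot|_t=e^{-v_t}$ is the $t$-adic absolute value on $R_I[[t]]$, extended to matrices by the maximum over entries; $\mathbb{1}$ is the identity matrix. *)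

(* Defs.v *)
From HB Require Import structures.
From Stdlib Require Import ClassicalEpsilon FunctionalExtensionality Lia.
From mathcomp Require Import all_boot all_order all_algebra all_field.

Set Implicit Arguments.
Unset Strict Implicit.
Unset Printing Implicit Defensive.

Import Order.TTheory GRing.Theory Num.Theory.
Local Open Scope ring_scope.

Section PowerSeries.
Variable K : fieldType.

Record pseries := PSeries { pscoef : nat -> K }.

Lemma ps_ext (f g : pseries) : pscoef f =1 pscoef g -> f = g.
Proof. by case: f g => f [g] /= H; congr PSeries; apply: functional_extensionality. Qed.

Definition ps_eqb (f g : pseries) : bool :=
  if excluded_middle_informative (f = g) then true else false.
Lemma ps_eqP : Equality.axiom ps_eqb.
Proof. by move=> f g; rewrite /ps_eqb; case: excluded_middle_informative => H; constructor. Qed.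
HB.instance Definition _ := hasDecEq.Build pseries ps_eqP.

Definition ps_find (P : pred pseries) (n : nat) : option pseries :=
  match excluded_middle_informative (exists x, P x) with
  | left H => Some (proj1_sig (constructive_indefinite_description _ H))
  | right _ => None
  end.
Lemma ps_find_correct P n x : ps_find P n = Some x -> P x.
Proof.
rewrite /ps_find; case: excluded_middle_informative => // H [<-].
by case: constructive_indefinite_description.
Qed.
Lemma ps_find_complete (P : pred pseries) : (exists x, P x) -> exists n, ps_find P n.
Proof. by move=> H; exists 0%N; rewrite /ps_find; case: excluded_middle_informative. Qed.
Lemma ps_find_ext (P Q : pred pseries) : P =1 Q -> ps_find P =1 ps_find Q.
Proof. by move=> /functional_extensionality ->. Qed.
HB.instance Definition _ :=
  hasChoice.Build pseries ps_find_correct ps_find_complete ps_find_ext.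

Definition ps0 := PSeries (fun _ => 0).
Definition psopp f := PSeries (fun n => - pscoef f n).
Definition psadd f g := PSeries (fun n => pscoef f n + pscoef g n).
Lemma psaddA : associative psadd.
Proof. by move=> f g h; apply: ps_ext => n /=; rewrite addrA. Qed.
Lemma psaddC : commutative psadd.
Proof. by move=> f g; apply: ps_ext => n /=; rewrite addrC. Qed.
Lemma psadd0 : left_id ps0 psadd.
Proof. by move=> f; apply: ps_ext => n /=; rewrite add0r. Qed.
Lemma psaddN : left_inverse ps0 psopp psadd.
Proof. by move=> f; apply: ps_ext => n /=; rewrite addNr. Qed.
HB.instance Definition _ := GRing.isZmodule.Build pseries psaddA psaddC psadd0 psaddN.

Definition pstr (n : nat) (f : pseries) : {poly K} := \poly_(i < n.+1) pscoef f i.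

Definition psmul f g := PSeries (fun n => (pstr n f * pstr n g)`_n).
Definition ps1 := PSeries (fun n => (n == 0%N)%:R).

Definition pagree (n : nat) (p q : {poly K}) := forall k, (k <= n)%N -> p`_k = q`_k.

Lemma pagree_mul n p p' q q' :
  pagree n p p' -> pagree n q q' -> pagree n (p * q) (p' * q').
Proof.
move=> Hp Hq k kn; rewrite !coefM; apply: eq_bigr => i _.
rewrite Hp ?Hq //; [exact: leq_trans (leq_subr _ _) kn|].
by apply: leq_trans kn; rewrite -ltnS.
Qed.

Lemma pagree_tr m n f : (m <= n)%N -> pagree m (pstr m f) (pstr n f).
Proof.
by move=> mn k km; rewrite !coef_poly !ltnS km (leq_trans km mn).
Qed.

Lemma pstr_mul n f g : pagree n (pstr n (psmul f g)) (pstr n f * pstr n g).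
Proof.
move=> k kn; rewrite coef_poly ltnS kn /=.
by apply: pagree_mul; [exact: pagree_tr|exact: pagree_tr|].
Qed.

Lemma psmulA : associative psmul.
Proof.
move=> f g h; apply: ps_ext => n /=.
have -> : (pstr n f * pstr n (psmul g h))`_n = (pstr n f * (pstr n g * pstr n h))`_n.
  exact: (@pagree_mul n _ _ _ _ (fun k _ => erefl) (@pstr_mul n g h) n (leqnn n)).
have -> : (pstr n (psmul f g) * pstr n h)`_n = (pstr n f * pstr n g * pstr n h)`_n.
  exact: (@pagree_mul n _ _ _ _ (@pstr_mul n f g) (fun k _ => erefl) n (leqnn n)).
by rewrite mulrA.
Qed.

Lemma psmulC : commutative psmul.
Proof. by move=> f g; apply: ps_ext => n /=; rewrite mulrC. Qed.

Lemma pstr1 n : pstr n ps1 = 1.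
Proof.
apply/polyP => k; rewrite coef_poly coef1 /=.
by case: ifP => // /negbT; rewrite -leqNgt; case: k.
Qed.

Lemma psmul1 : left_id ps1 psmul.
Proof. by move=> f; apply: ps_ext => n /=; rewrite pstr1 mul1r coef_poly ltnSn. Qed.

Lemma pstrD n f g : pstr n (psadd f g) = pstr n f + pstr n g.
Proof. by apply/polyP => k; rewrite coefD !coef_poly; case: ifP; rewrite ?addr0. Qed.

Lemma psmulDl : left_distributive psmul psadd.
Proof. by move=> f g h; apply: ps_ext => n /=; rewrite pstrD mulrDl coefD. Qed.

Lemma ps1_neq0 : ps1 != ps0.
Proof.
apply/eqP => /(congr1 (fun f => pscoef f 0%N)) /= /eqP.
by rewrite oner_eq0.
Qed.

HB.instance Definition _ :=
  GRing.Zmodule_isComNzRing.Build pseries psmulA psmulC psmul1 psmulDl ps1_neq0.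

Lemma pscoefM (f g : pseries) n :
  pscoef (f * g) n = \sum_(i < n.+1) pscoef f i * pscoef g (n - i).
Proof.
rewrite /= coefM; apply: eq_bigr => i _; rewrite !coef_poly.
by rewrite ltn_ord ltnS leq_subr.
Qed.

Definition ps_unitb (x : pseries) : bool :=
  if excluded_middle_informative (exists y, y * x = 1) then true else false.
Definition ps_inv (x : pseries) : pseries :=
  match excluded_middle_informative (exists y, y * x = 1) with
  | left H => proj1_sig (constructive_indefinite_description _ H)
  | right _ => x
  end.
Lemma ps_mulVx : {in ps_unitb, left_inverse 1 ps_inv *%R}.
Proof.
move=> x; rewrite /ps_unitb /ps_inv unfold_in.
by case: excluded_middle_informative => // H _; case: constructive_indefinite_description.
Qed.
Lemma ps_unitPl x y : y * x = 1 -> ps_unitb x.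
Proof.
move=> H; rewrite /ps_unitb; case: excluded_middle_informative => // [[]].
by exists y.
Qed.
Lemma ps_invr_out : {in [predC ps_unitb], ps_inv =1 id}.
Proof.
move=> x; rewrite inE /= unfold_in /ps_unitb /ps_inv; by case: excluded_middle_informative.

Qed.
HB.instance Definition _ :=
  GRing.ComNzRing_hasMulInverse.Build pseries ps_mulVx ps_unitPl ps_invr_out.

Lemma ps_neq0 (f : pseries) : f != 0 -> exists k, pscoef f k != 0.
Proof.
move=> nf; apply: NNPP => nex; move/eqP: nf; apply; apply: ps_ext => k /=.
by apply/eqP; apply: NNPP => h; apply: nex; exists k; apply/negP.
Qed.

Lemma ps_idomain : GRing.integral_domain_axiom pseries.
Proof.
move=> f g fg0; apply/norP => -[nf ng].
have ef := ps_neq0 nf; have eg := ps_neq0 ng.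
have [a' fa amin] : exists2 a', pscoef f a' != 0 & forall k, pscoef f k != 0 -> (a' <= k)%N.
  by case: (ex_minnP ef) => m; exists m.
have [b' gb bmin] : exists2 b', pscoef g b' != 0 & forall k, pscoef g k != 0 -> (b' <= k)%N.
  by case: (ex_minnP eg) => m; exists m.
have := congr1 (fun h => pscoef h (a' + b')%N) fg0; rewrite pscoefM /=.
have la : (a' < (a' + b').+1)%N by rewrite ltnS leq_addr.
rewrite (bigD1 (Ordinal la)) //= big1 ?addr0.
  by rewrite addKn => /eqP; rewrite mulf_eq0 (negbTE fa) (negbTE gb).
move=> i /eqP ia; have [lt|ge] := ltnP i a'.
  have -> : pscoef f i = 0.
    by apply/eqP; apply: contraTT lt => /amin; rewrite -leqNgt.
  by rewrite mul0r.
have gt : (a' < i)%N by rewrite ltn_neqAle ge andbT; apply/eqP => h; apply: ia; apply: val_inj.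
have -> : pscoef g (a' + b' - i) = 0.
  apply/eqP; apply: contraTT gt => /bmin h.
  by have hi := ltn_ord i; rewrite -leqNgt -(leq_add2r b') -leq_subRL.
by rewrite mulr0.
Qed.

HB.instance Definition _ := GRing.ComUnitRing_isIntegral.Build pseries ps_idomain.

End PowerSeries.

Arguments pscoef {K}.

Notation "x %:F" := (@FracField.tofrac _ x) : ring_scope.

(* Number-theoretic data.  A number field is a finite field extension  *)
(* K of Q ('fieldExtType rat'); Hom(K, C) is the type of ring          *)
(* morphisms K -> algC (algC = algebraic closure of Q inside C, which  *)
(* receives every embedding of a number field).                        *)
Section NumberField.
Variable K : fieldExtType rat.

Definition in_ring_of_integers (x : K) : Prop :=
  exists p : {poly int}, p \is monic /\ root (map_poly (fun z : int => z%:~R) p) x.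

Definition knorm_le (x : K) (c : algC) : Prop :=
  forall sigma : {rmorphism K -> algC}, `|sigma x| <= c.

(* limsup_n ||a_n||^(1/n) <= 1, unfolded: for every eps > 0, eventually
   ||a_n|| <= (1 + eps)^n *)
Definition limsup_root_le1 (a : nat -> K) : Prop :=
  forall eps : algC, 0 < eps ->
    exists N : nat, forall m : nat, (N <= m)%N -> knorm_le (a m) ((1 + eps) ^+ m).

Variables (I : finType) (one : I) (a : I -> K).

Definition aprod (J : {set I}) : K := \prod_(j in J) a j.

Definition in_RJ (J : {set I}) (x : K) : Prop :=
  exists (r : K) (k : nat), in_ring_of_integers r /\ x = r / aprod J ^+ k.

(* D_J = R_J{t} if 1 \notin J, D_J = R_J[[t]] if 1 \in J *)
Definition in_DJ (J : {set I}) (f : pseries K) : Prop :=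
  (forall m, in_RJ J (pscoef f m)) /\ (one \notin J -> limsup_root_le1 (pscoef f)).

(* Q_J = Quot(D_J), viewed inside the fraction field of K[[t]]
   (which contains Q = Quot(D_I)) *)
Definition in_QJ (J : {set I}) (x : {fraction pseries K}) : Prop :=
  exists f g : pseries K, [/\ in_DJ J f, in_DJ J g, g != 0 & x = f%:F / g%:F].

(* Q_i = Quot(D_i), D_i = D_{I \ {i}} *)
Definition in_Qi (i : I) (x : {fraction pseries K}) : Prop := in_QJ [set~ i] x.

Definition in_Qi' (i : I) (x : {fraction pseries K}) : Prop :=
  forall j : I, j != i -> in_Qi j x.

End NumberField.

Definition in_GL (F : fieldType) (n : nat) (S : F -> Prop) (M : 'M[F]_n) : Prop :=
  [/\ M \in unitmx, forall r c, S (M r c) & forall r c, S (invmx M r c)].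

(* |x|_t < 1 for x in K[[t]], |x|_t = exp(-v_t(x)): v_t(x) >= 1, i.e. the
   constant coefficient vanishes; extended to matrices by the maximum *)
Definition tabs_lt1 (K : fieldType) (x : pseries K) : Prop := pscoef x 0%N = 0.
Definition tabs_mx_lt1 (K : fieldType) (n : nat) (M : 'M[pseries K]_n) : Prop :=
  forall r c, tabs_lt1 (M r c).

(* Main.v *)
Require Import Defs.
From HB Require Import structures.
From mathcomp Require Import all_boot all_order all_algebra all_field.
From Stdlib Require Import ClassicalEpsilon FunctionalExtensionality Classical.
From mathcomp Require Import ring.
Import Order.TTheory GRing.Theory Num.Theory.
Local Open Scope ring_scope.

Lemma root_bound (F : numFieldType) (p : {poly F}) (z : F) :
  p \is monic -> root p z -> `|z| <= 1 + \sum_(i < size p) `|p`_i|.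
Proof.
move=> mp /rootP pz.
have [hz|hz] := real_leP (normr_real z) (@real1 F); first by apply: le_trans hz _; rewrite lerDl sumr_ge0.
apply: (@le_trans _ _ (\sum_(i < size p) `|p`_i|)); last by rewrite lerDr.
have sp : size p = (size p).-1.+1 by rewrite -polySpred ?monic_neq0.
set d := (size p).-1 in sp.
have ld : p`_d = 1 by move/monicP: mp; rewrite /lead_coef.
have d0 : (0 < d)%N.
  case: d sp ld => // sp ld; move: pz; rewrite horner_coef sp big_ord1 ld.
  by rewrite expr0 mulr1 => /eqP; rewrite oner_eq0.
have z1 : 1 <= `|z| by rewrite ltW.
move: pz; rewrite horner_coef sp big_ord_recr /= ld mul1r => /eqP.
rewrite addr_eq0 => /eqP hzd0.
have hzd : z ^+ d = - (\sum_(i < d) p`_i * z ^+ i) by rewrite hzd0 opprK.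
have key : `|z| ^+ d <= (\sum_(i < d) `|p`_i|) * `|z| ^+ d.-1.
  rewrite -normrX hzd normrN mulr_suml; apply: le_trans (ler_norm_sum _ _ _) _.
  apply: ler_sum => i _; rewrite normrM normrX ler_wpM2l //.
  by apply: ler_weXn2l => //; rewrite -ltnS prednK.
have zpos : 0 < `|z| ^+ d.-1 by rewrite exprn_gt0 // (lt_le_trans ltr01).
have : `|z| <= \sum_(i < d) `|p`_i|.
  by rewrite -(ler_pM2r zpos) -exprS prednK.
move/le_trans; apply; rewrite big_ord_recr /= lerDl //.
Qed.

Section NF.
Variable K : fieldExtType rat.
Local Notation RI := (@in_ring_of_integers K).

Lemma RIE (x : K) : RI x <-> integralOver (intr : int -> K) x.
Proof. by split => [[p [Hp Hr]]|[p Hp Hr]]; exists p. Qed.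

Lemma RI_add x y : RI x -> RI y -> RI (x + y).
Proof. by move=> /RIE hx /RIE hy; apply/RIE; apply: integral_add. Qed.
Lemma RI_sub x y : RI x -> RI y -> RI (x - y).
Proof. by move=> /RIE hx /RIE hy; apply/RIE; apply: integral_sub. Qed.
Lemma RI_mul x y : RI x -> RI y -> RI (x * y).
Proof. by move=> /RIE hx /RIE hy; apply/RIE; apply: integral_mul. Qed.
Lemma RI_int (z : int) : RI (z%:~R).
Proof. by apply/RIE; apply: (integral_id (intr : {rmorphism int -> K})). Qed.
Lemma RI_nat (m : nat) : RI (m%:R).
Proof. by have := RI_int m. Qed.
Lemma RI_0 : RI 0. Proof. exact: (RI_nat 0). Qed.
Lemma RI_1 : RI 1. Proof. exact: (RI_nat 1). Qed.
Lemma RI_X x m : RI x -> RI (x ^+ m).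
Proof. by move=> hx; elim: m => [|m IH]; [rewrite expr0; exact: RI_1|rewrite exprS; exact: RI_mul]. Qed.

Lemma alg_rat (x : K) : exists q : {poly rat}, q \is monic /\ root (map_poly (in_alg K) q) x.
Proof.
have /polyOver1P [q hq] := minPolyOver 1 x.
exists q; split; last by rewrite -hq root_minPoly.
by rewrite -(map_monic (in_alg K)) -hq monic_minPoly.
Qed.

Lemma sigma_alg (sigma : {rmorphism K -> algC}) (c : rat) : sigma (in_alg K c) = ratr c.
Proof. exact: (fmorph_eq_rat (sigma \o in_alg K)). Qed.

Lemma elt_bound (x : K) : exists B : algC, 0 <= B /\ knorm_le x B.
Proof.
have [q [mq rq]] := alg_rat x.
exists (1 + \sum_(i < size (map_poly ratr q : {poly algC})) `|(map_poly ratr q : {poly algC})`_i|).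
split; first by rewrite addr_ge0 ?sumr_ge0.
move=> sigma; apply: root_bound; first by rewrite map_monic.
have := rmorph_root sigma rq; rewrite -map_poly_comp.
by rewrite (eq_map_poly (sigma_alg sigma)).
Qed.

Lemma denom_clear (x : K) : exists d : nat, (0 < d)%N /\ RI (d%:R * x).
Proof.
have [q [mq rq]] := alg_rat x.
set s := size q.
have s0 : (0 < s)%N by rewrite /s size_poly_gt0 monic_neq0.
pose D : nat := (\prod_(i < s) `|denq q`_i|)%N.
have D0 : (0 < D)%N by rewrite prodn_gt0 // => i; rewrite absz_gt0 denq_neq0.
exists D; split => //.
pose c i : rat := q`_i * D%:R ^+ (s.-1 - i).
have lc : c s.-1 = 1.
  by rewrite /c subnn expr0 mulr1; move/monicP: mq; rewrite /lead_coef.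
have cint i : (i < s)%N -> c i \is a Num.int.
  move=> lis.
  case: (ltnP i s.-1) => hi; last first.
    have -> : i = s.-1 by apply/eqP; rewrite eqn_leq hi andbT -ltnS prednK.
    by rewrite lc (intr_int _ 1).
  rewrite /c.
  have -> : (s.-1 - i = (s.-1 - i).-1.+1)%N by rewrite prednK // subn_gt0.
  rewrite exprS mulrA rpredM ?rpredX ?(intr_int _ D) //.
  have -> : D = (`|denq q`_i| * \prod_(j < s | j != Ordinal lis) `|denq q`_j|)%N.
    by rewrite /D (bigD1 (Ordinal lis)).
  rewrite natrM mulrA rpredM ?(intr_int _ (\prod_(j < s | j != Ordinal lis) `|denq q`_j|)%N) //.
  by rewrite natr_absz gtr0_norm ?denq_gt0 // -numqE intr_int.
pose p : {poly int} := \poly_(i < s) Num.floor (c i).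
have hc i : (i < s)%N -> ((Num.floor (c i))%:~R : rat) = c i.
  by move/cint/floorK.
have sp : size p = s.
  by rewrite size_poly_eq // lc floor1.
have lp : lead_coef p = 1.
  by rewrite /lead_coef sp coef_poly prednK // leqnn lc floor1.
exists p; split; first by rewrite monicE lp.
rewrite /root (@horner_coef_wide _ s); last first.
  by rewrite size_map_poly_id0 ?sp // lp rmorph1 oner_neq0.
have rq' := rq; move: rq'; rewrite /root (@horner_coef_wide _ s) ?size_map_poly // => /eqP hq.
apply/eqP; transitivity ((D%:R : K) ^+ s.-1 * \sum_(i < s) (map_poly (in_alg K) q)`_i * x ^+ i); last by rewrite hq mulr0.
rewrite mulr_sumr; apply: eq_bigr => i _; rewrite coef_map coef_poly ltn_ord /= coef_map /=.
rewrite -[((Num.floor (c i))%:~R : K)](rmorph_int (in_alg K)) hc // /c.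
rewrite rmorphM rmorphXn rmorph_nat exprMn.
have hi : (i <= s.-1)%N by rewrite -ltnS prednK.
rewrite -[in RHS](subnK hi) exprD /=; ring.
Qed.

Lemma RI_sum (J : finType) (P : pred J) (F : J -> K) :
  (forall j, RI (F j)) -> RI (\sum_(j | P j) F j).
Proof. by move=> hF; apply: big_ind => //; [exact: RI_0|exact: RI_add]. Qed.
Lemma RI_prod (J : finType) (P : pred J) (F : J -> K) :
  (forall j, RI (F j)) -> RI (\prod_(j | P j) F j).
Proof. by move=> hF; apply: big_ind => //; [exact: RI_1|exact: RI_mul]. Qed.

Lemma reduce_bound : exists C : algC, 0 <= C /\
  forall y : K, exists w, RI w /\ knorm_le (y - w) C.
Proof.
pose e := vbasis (fullv : {vspace K}).
have [d hd] := fin_all_exists (fun i : 'I_(\dim (fullv : {vspace K})) => denom_clear e`_i).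
pose f i := (d i)%:R * e`_i.
have [B hB] := fin_all_exists (fun i => elt_bound (f i)).
exists (\sum_i B i); split; first by apply: sumr_ge0 => i _; case: (hB i).
move=> y.
pose q i := coord e i y / (d i)%:R.
exists (\sum_i (Num.floor (q i))%:~R * f i); split.
  by apply: RI_sum => i; apply: RI_mul; [exact: RI_int|case: (hd i)].
have ey : y = \sum_i in_alg K (q i) * f i.
  rewrite {1}(coord_vbasis (memvf y)); apply: eq_bigr => i _.
  rewrite /f /q mulrA -(rmorph_nat (in_alg K)) -rmorphM mulfVK; last first.
    by rewrite pnatr_eq0 -lt0n; case: (hd i).
  by rewrite /= mulr_algl.
rewrite {1}ey -sumrB => sigma.
rewrite rmorph_sum /=; apply: le_trans (ler_norm_sum _ _ _) _.
apply: ler_sum => i _.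
rewrite -(rmorph_int (in_alg K)) -mulrBl rmorphM rmorphB /=.
have hs c : sigma (c%:A) = ratr c := sigma_alg sigma c.
rewrite hs (sigma_alg sigma) -rmorphB normrM.
have [B0 hBi] := hB i.
rewrite -[B i]mul1r; apply: ler_pM => //.
set r := q i - _.
suff h : `|r| <= 1.
  by rewrite -ratr_norm; move: h; rewrite -(ler_rat algC) rmorph1.
rewrite ger0_norm ?subr_ge0 ?floor_le //.
rewrite lerBlDl ltW // -(intrD _ _ 1); exact: floorD1_gt.
Qed.
End NF.


Section RJ.
Variables (K : fieldExtType rat) (I : finType) (a : I -> K).
Hypothesis ha_int : forall i : I, in_ring_of_integers (a i).
Hypothesis ha_nz : forall i : I, a i != 0.
Hypothesis ha_cop : forall i j : I, i != j ->
       exists r s : K, [/\ in_ring_of_integers r, in_ring_of_integers s &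
                           a i * r + a j * s = 1].
Local Notation RI := (@in_ring_of_integers K).
Local Notation RJ := (in_RJ a).

Lemma aprod_RI J : RI (aprod a J).
Proof. by rewrite /aprod; apply: RI_prod => j; apply: ha_int. Qed.
Lemma aprod_nz J : aprod a J != 0.
Proof. by rewrite /aprod; apply/prodf_neq0 => j _; apply: ha_nz. Qed.

Lemma RJ_RI J x : RI x -> RJ J x.
Proof. by move=> hx; exists x, 0%N; rewrite expr0 divr1. Qed.
Lemma RJ_0 J : RJ J 0. Proof. exact/RJ_RI/RI_0. Qed.
Lemma RJ_1 J : RJ J 1. Proof. exact/RJ_RI/RI_1. Qed.

Lemma RJ_add J x y : RJ J x -> RJ J y -> RJ J (x + y).
Proof.
move=> [r [k [hr ->]]] [r' [k' [hr' ->]]].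
have hp := aprod_nz J.
exists (r * aprod a J ^+ k' + r' * aprod a J ^+ k), (k + k')%N; split.
  by apply: RI_add; apply: RI_mul => //; apply/RI_X/aprod_RI.
by rewrite exprD; field; rewrite !expf_neq0.
Qed.
Lemma RJ_opp J x : RJ J x -> RJ J (- x).
Proof.
move=> [r [k [hr ->]]]; exists (- r), k; split; last by rewrite mulNr.
by rewrite -sub0r; apply: RI_sub => //; exact: RI_0.
Qed.
Lemma RJ_sub J x y : RJ J x -> RJ J y -> RJ J (x - y).
Proof. by move=> hx hy; apply: RJ_add => //; apply: RJ_opp. Qed.
Lemma RJ_mul J x y : RJ J x -> RJ J y -> RJ J (x * y).
Proof.
move=> [r [k [hr ->]]] [r' [k' [hr' ->]]].
have hp := aprod_nz J.
exists (r * r'), (k + k')%N; split; first exact: RI_mul.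
by rewrite exprD; field; rewrite !expf_neq0.
Qed.
Lemma RJ_sum J (T : finType) (P : pred T) (F : T -> K) :
  (forall j, RJ J (F j)) -> RJ J (\sum_(j | P j) F j).
Proof. by move=> hF; apply: big_ind => //; [exact: RJ_0|exact: RJ_add]. Qed.

Lemma RJ_sub_set (J1 J2 : {set I}) x : J1 \subset J2 -> RJ J1 x -> RJ J2 x.
Proof.
move=> sJ [r [k [hr ->]]].
have e : aprod a J2 = aprod a J1 * aprod a (J2 :\: J1).
  by rewrite /aprod (big_setID J1) /= (setIidPr sJ).
have h1 := aprod_nz J1; have h2 := aprod_nz (J2 :\: J1).
exists (r * aprod a (J2 :\: J1) ^+ k), k; split.
  by apply: RI_mul => //; apply/RI_X/aprod_RI.
by rewrite e exprMn; field; rewrite !expf_neq0.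
Qed.

Definition copr (u v : K) := exists r s, [/\ RI r, RI s & u * r + v * s = 1].

Lemma copr_sym u v : copr u v -> copr v u.
Proof. by move=> [r [s [hr hs e]]]; exists s, r; split => //; rewrite addrC. Qed.

Lemma copr_mul u x y : RI u -> RI x -> RI y -> copr u x -> copr u y -> copr u (x * y).
Proof.
move=> hu hx hy.
move=> [r1 [s1 [hr1 hs1 e1]]] [r2 [s2 [hr2 hs2 e2]]].
exists (r1 * u * r2 + r1 * y * s2 + x * s1 * r2), (s1 * s2); split.
- by do !apply: RI_add; do !apply: RI_mul.
- exact: RI_mul.
- by rewrite -[1](mulr1 1) -{1}e1 -e2; ring.
Qed.

Lemma copr_set (i : I) (S : {set I}) : i \notin S -> copr (a i) (aprod a S).
Proof.
move=> niS; rewrite /aprod.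
suff [] : RI (\prod_(j in S) a j) /\ copr (a i) (\prod_(j in S) a j) by [].
apply: (big_ind (fun x => RI x /\ copr (a i) x)) => [|x y [hx cx] [hy cy]|j jS].
- split; first exact: RI_1.
  by exists 0, 1; split; [exact: RI_0|exact: RI_1|rewrite mulr0 add0r mulr1].
- split; first exact: RI_mul.
  by apply: copr_mul => //; apply: ha_int.
- split; first exact: ha_int.
  have : i != j by apply: contraNneq niS => ->.
  by move/ha_cop => [r [s [hr hs e]]]; exists r, s.
Qed.

Lemma copr_powl u v k : RI u -> RI v -> copr u v -> copr (u ^+ k) v.
Proof.
move=> hu hv c; elim: k => [|k IH].
  by rewrite expr0; exists 1, 0; split; [exact: RI_1|exact: RI_0|rewrite mulr1 mulr0 addr0].
rewrite exprSr; apply: copr_sym; apply: copr_mul => //; first exact: RI_X.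
  exact: copr_sym.
exact: copr_sym.
Qed.

Lemma copr_pow u v k : RI u -> RI v -> copr u v -> copr (u ^+ k) (v ^+ k).
Proof.
move=> hu hv c; apply: copr_sym; apply: copr_powl => //; first exact: RI_X.
by apply: copr_sym; apply: copr_powl.
Qed.

Lemma aprodT_split (i : I) : aprod a setT = a i * aprod a [set~ i].
Proof.
rewrite /aprod (big_setD1 i) ?in_setT //=; congr (_ * _).
by apply: eq_bigl => j; rewrite !inE andbT.
Qed.

Lemma split_RJ (C : algC) (hC : forall y : K, exists w, RI w /\ knorm_le (y - w) C)
  (i : I) (side : bool) (c : K) : RJ setT c ->
  exists u v, [/\ c = u + v, RJ [set i] u, RJ [set~ i] v &
     (if side then knorm_le u C else knorm_le v C)].
Proof.
move=> [r [k [hr ->]]].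
set A := aprod a [set~ i].
have hA : RI A by apply: aprod_RI.
have hA0 : A != 0 by apply: aprod_nz.
have hai := ha_int i; have hai0 := ha_nz i.
have [al [be [hal hbe e]]] : copr (a i ^+ k) (A ^+ k).
  apply: copr_pow => //; apply: copr_set; by rewrite !inE eqxx.
have a1 : aprod a [set i] = a i by rewrite /aprod big_set1.
pose u0 := r * be / a i ^+ k.
pose v0 := r * al / A ^+ k.
have ec : r / aprod a setT ^+ k = u0 + v0.
  rewrite (aprodT_split i) /u0 /v0 -/A -[r]mulr1 -{1}e.
  by rewrite exprMn; field; rewrite !expf_neq0.
have Ru0 : RI (r * be) by apply: RI_mul.
have Rv0 : RI (r * al) by apply: RI_mul.
case: side.
- have [w [hw hb]] := hC u0.
  exists (u0 - w), (v0 + w); split => //.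
  + by rewrite ec; ring.
  + exists (r * be - w * a i ^+ k), k; split.
      by apply: RI_sub => //; apply: RI_mul => //; apply: RI_X.
    by rewrite a1 /u0; field; rewrite expf_neq0.
  + exists (r * al + w * A ^+ k), k; split.
      by apply: RI_add => //; apply: RI_mul => //; apply: RI_X.
    by rewrite /v0; field; rewrite expf_neq0.
- have [w [hw hb]] := hC v0.
  exists (u0 + w), (v0 - w); split => //.
  + by rewrite ec; ring.
  + exists (r * be + w * a i ^+ k), k; split.
      by apply: RI_add => //; apply: RI_mul => //; apply: RI_X.
    by rewrite a1 /u0; field; rewrite expf_neq0.
  + exists (r * al - w * A ^+ k), k; split.
      by apply: RI_sub => //; apply: RI_mul => //; apply: RI_X.
    by rewrite /v0; field; rewrite expf_neq0.
Qed.
End RJ.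


Section Anal.
Implicit Types x e d M : algC.

Lemma bernoulli x m : 0 <= x -> 1 + m%:R * x <= (1 + x) ^+ m.
Proof.
move=> x0; elim: m => [|m IH]; first by rewrite mul0r addr0 expr0.
rewrite exprSr; apply: le_trans (ler_wpM2r _ IH); last by rewrite addr_ge0.
rewrite mulrDl mul1r mulrDr mulr1 -addrA lerD2l mulrSr mulrDl mul1r.
by rewrite [m%:R * x + x]addrC lerD2l lerDl !mulr_ge0 // ler0n.
Qed.

Lemma growth M d : 0 <= M -> 0 < d -> exists N, forall m, (N <= m)%N -> M <= (1 + d) ^+ m.
Proof.
move=> M0 d0.
have := archi_boundP (normr_ge0 (M / d)); set N := Num.Def.archi_bound _ => hN.
exists N => m hm.
apply: (le_trans _ (@bernoulli d m (ltW d0))); rewrite -{1}(ger0_norm M0).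
have hMd : `|M / d| = M / d by rewrite ger0_norm // divr_ge0 // ltW.
rewrite hMd in hN.
rewrite (ger0_norm M0) -(divfK (lt0r_neq0 d0) M).
apply: (@le_trans _ _ (m%:R * d)); last by rewrite lerDr ler01.
rewrite ler_wpM2r ?ltW //; apply: (lt_le_trans hN); by rewrite ler_nat.
Qed.

Lemma lin_exp d m : 0 < d -> d <= 1 -> m.+1%:R * d <= (1 + d) ^+ m.
Proof.
move=> d0 d1; apply: le_trans (@bernoulli d m (ltW d0)).
by rewrite mulrSr mulrDl mul1r addrC lerD2r.
Qed.

Lemma lerXn2 x y n : 0 <= x -> x <= y -> x ^+ n <= y ^+ n.
Proof. by move=> x0 xy; apply: lerXn2r => //; rewrite nnegrE //; exact: le_trans xy. Qed.

Lemma pick_e eps : 0 < eps -> exists e, [/\ 0 < e, e <= 1 & (1 + e) ^+ 2 <= 1 + eps].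
Proof.
move=> e0; have h3 : 0 < 3 + eps by rewrite addr_gt0 // ltr0n.
exists (eps / (3 + eps)); split.
- exact: divr_gt0.
- by rewrite ler_pdivrMr // mul1r lerDr ler0n.
- set e := eps / (3 + eps).
  have ege : 0 <= e by rewrite divr_ge0 ?ltW.
  have ele : e <= 1 by rewrite ler_pdivrMr // mul1r lerDr ler0n.
  have e2 : e ^+ 2 <= e by rewrite expr2 ler_piMl.
  have e3 : 3 * e <= eps.
    by rewrite /e mulrA ler_pdivrMr // mulrDr mulrC lerDl mulr_ge0 ?ltW.
  have -> : (1 + e) ^+ 2 = 1 + e *+ 2 + e ^+ 2 by rewrite addrC sqrrD1; ring.
  rewrite -addrA lerD2l; apply: le_trans e3; rewrite (mulr_natl e 3) mulrSr.
  by rewrite mulr1n !mulrS mulr0n addr0 -addrA !lerD2l.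
Qed.
End Anal.

Section Conv.
Variable K : fieldExtType rat.

Definition bnd (x : K) : algC := proj1_sig (constructive_indefinite_description _ (@elt_bound K x)).
Lemma bnd_ge0 x : 0 <= bnd x.
Proof. by rewrite /bnd; case: constructive_indefinite_description => B []. Qed.
Lemma bnd_spec x : knorm_le x (bnd x).
Proof. by rewrite /bnd; case: constructive_indefinite_description => B []. Qed.

Lemma knorm_le_trans {x : K} {c c' : algC} : knorm_le x c -> c <= c' -> knorm_le x c'.
Proof. by move=> h hc s; apply: le_trans (h s) hc. Qed.

Definition convM (f : nat -> K) := forall e : algC, 0 < e ->
  exists M, 0 <= M /\ forall m, knorm_le (f m) (M * (1 + e) ^+ m).

Lemma conv_M f : limsup_root_le1 f -> convM f.
Proof.
move=> H e e0; have [N hN] := H e e0.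
pose M := 1 + \sum_(k < N) bnd (f k).
have M1 : 1 <= M by rewrite lerDl sumr_ge0 // => k _; apply: bnd_ge0.
exists M; split; first by apply: le_trans M1; apply: ler01.
move=> m; have ex1 : 1 <= (1 + e) ^+ m by rewrite exprn_ege1 // lerDl ltW.
have [lt|ge] := ltnP m N.
- apply: (knorm_le_trans (bnd_spec _)).
  apply: le_trans (_ : M <= _); last by rewrite ler_peMr // (le_trans ler01).
  apply: (@le_trans _ _ (\sum_(k < N) bnd (f k))); last by rewrite lerDr ler01.
  rewrite (bigD1 (Ordinal lt)) //= lerDl sumr_ge0 // => k _; apply: bnd_ge0.
- apply: (knorm_le_trans (hN m ge)).
  by rewrite ler_peMl // (le_trans ler01) // ltW.
Qed.

Lemma M_conv f : convM f -> limsup_root_le1 f.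
Proof.
move=> H eps eps0; have [e [e0 e1 he]] := @pick_e eps eps0.
have [M [M0 hM]] := H e e0.
have [N hN] := @growth M e M0 e0.
exists N => m hm; apply: (knorm_le_trans (hM m)).
have ge0 : 0 <= (1 + e) ^+ m by rewrite exprn_ge0 // addr_ge0 // ltW.
apply: (@le_trans _ _ ((1 + e) ^+ m * (1 + e) ^+ m)).
  by rewrite ler_wpM2r // hN.
rewrite -expr2 -exprM mulnC exprM; apply: lerXn2 => //.
by rewrite exprn_ge0 // addr_ge0 // ltW.
Qed.

Lemma convM_add f g : convM f -> convM g -> convM (fun m => f m + g m).
Proof.
move=> hf hg e e0; have [Mf [Mf0 hMf]] := hf e e0; have [Mg [Mg0 hMg]] := hg e e0.
exists (Mf + Mg); split; first by rewrite addr_ge0.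
move=> m s; rewrite rmorphD; apply: le_trans (ler_normD _ _) _.
by rewrite mulrDl lerD // ?hMf ?hMg.
Qed.

Lemma convM_opp f : convM f -> convM (fun m => - f m).
Proof.
move=> hf e e0; have [M [M0 hM]] := hf e e0; exists M; split => // m s.
by rewrite rmorphN normrN hM.
Qed.

Lemma convM_bounded f C : 0 <= C -> (forall m, knorm_le (f m) C) -> convM f.
Proof.
move=> C0 hC e e0; exists C; split => // m; apply: (knorm_le_trans (hC m)).
by rewrite ler_peMr // exprn_ege1 // lerDl ltW.
Qed.

Lemma convM_mul f g : convM f -> convM g ->
  convM (fun m => \sum_(i < m.+1) f i * g (m - i)%N).
Proof.
move=> hf hg eps eps0; have [e [e0 e1 he]] := @pick_e eps eps0.
have [Mf [Mf0 hMf]] := hf e e0; have [Mg [Mg0 hMg]] := hg e e0.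
have ge0 k : 0 <= (1 + e) ^+ k by rewrite exprn_ge0 // addr_ge0 // ltW.
exists (Mf * Mg / e); split; first by rewrite !mulr_ge0 // invr_ge0 ltW.
move=> m s; rewrite rmorph_sum; apply: le_trans (ler_norm_sum _ _ _) _.
apply: (@le_trans _ _ (\sum_(i < m.+1) Mf * Mg * (1 + e) ^+ m)).
  apply: ler_sum => i _; rewrite rmorphM normrM.
  have -> : Mf * Mg * (1 + e) ^+ m = (Mf * (1 + e) ^+ i) * (Mg * (1 + e) ^+ (m - i)).
    by rewrite mulrACA -exprD subnKC // -ltnS.
  by apply: ler_pM; rewrite ?normr_ge0 //; [exact: hMf|exact: hMg].
rewrite sumr_const card_ord -mulr_natr.
have hl := @lin_exp e m e0 e1.
apply: (@le_trans _ _ (Mf * Mg / e * ((1 + e) ^+ m * (1 + e) ^+ m))).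
  have h2 : (m.+1)%:R <= (1 + e) ^+ m / e by rewrite ler_pdivlMr.
  have -> : Mf * Mg / e * ((1 + e) ^+ m * (1 + e) ^+ m) =
     Mf * Mg * (1 + e) ^+ m * ((1 + e) ^+ m / e).
    by field; rewrite lt0r_neq0.
  by apply: ler_wpM2l => //; rewrite !mulr_ge0.
rewrite -expr2 -exprM mulnC exprM; apply: ler_wpM2l.
  by rewrite !mulr_ge0 // invr_ge0 ltW.
by apply: lerXn2 => //; rewrite exprn_ge0 // addr_ge0 // ltW.
Qed.
End Conv.


Section Gen.
Variables (F : fieldType) (S : F -> Prop).
Hypotheses (S0 : S 0) (S1 : S 1) (SN : forall x, S x -> S (- x))
  (SD : forall x y, S x -> S y -> S (x + y)) (SM : forall x y, S x -> S y -> S (x * y))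
  (SV : forall x, S x -> S x^-1).

Lemma S_sum (T : finType) (P : pred T) (f : T -> F) : (forall j, S (f j)) -> S (\sum_(j | P j) f j).
Proof. by move=> h; apply: big_ind. Qed.
Lemma S_prod (T : finType) (P : pred T) (f : T -> F) : (forall j, S (f j)) -> S (\prod_(j | P j) f j).
Proof. by move=> h; apply: big_ind. Qed.
Lemma S_sign (k : nat) : S ((-1) ^+ k).
Proof. by elim: k => [|k IH]; rewrite ?expr0 // exprS; apply: SM => //; apply: SN. Qed.

Lemma S_det n (A : 'M[F]_n) : (forall i j, S (A i j)) -> S (\det A).
Proof.
move=> h; apply: S_sum => s; apply: SM; first exact: S_sign.
by apply: S_prod => i.
Qed.

Lemma S_invmx n (A : 'M[F]_n) : (forall i j, S (A i j)) -> forall i j, S (invmx A i j).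
Proof.
move=> h i j; rewrite /invmx; case: ifP => // _.
rewrite !mxE; apply: SM; first by apply/SV/S_det.
rewrite /cofactor; apply: SM; first exact: S_sign.
by apply: S_det => k l; rewrite !mxE.
Qed.
End Gen.

Section Ser.
Variables (K : fieldExtType rat) (I : finType) (one : I) (a : I -> K).
Hypothesis ha_int : forall i : I, in_ring_of_integers (a i).
Hypothesis ha_nz : forall i : I, a i != 0.
Local Notation DJ := (in_DJ one a).
Local Notation QJ := (in_QJ one a).

Lemma pscoefD (f g : pseries K) m : pscoef (f + g) m = pscoef f m + pscoef g m.
Proof. by []. Qed.
Lemma pscoefN (f : pseries K) m : pscoef (- f) m = - pscoef f m.
Proof. by []. Qed.
Lemma pscoef1 m : pscoef (1 : pseries K) m = (m == 0)%:R.
Proof. by []. Qed.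
Lemma pscoef0 m : pscoef (0 : pseries K) m = 0.
Proof. by []. Qed.

Lemma conv_bounded (f : nat -> K) C : 0 <= C -> (forall m, knorm_le (f m) C) -> limsup_root_le1 f.
Proof. by move=> C0 h; apply: M_conv; apply: convM_bounded h. Qed.

Lemma DJ_1 J : DJ J 1.
Proof.
split => [m|_].
  by rewrite pscoef1; case: (m == 0); [exact: RJ_1|exact: RJ_0].
apply: (@conv_bounded _ 1) => // m s; rewrite pscoef1 rmorph_nat.
by case: (m == 0); rewrite ?normr0 ?normr1.
Qed.
Lemma DJ_0 J : DJ J 0.
Proof.
split => [m|_]; first by rewrite pscoef0; exact: RJ_0.
by apply: (@conv_bounded _ 0) => // m s; rewrite pscoef0 rmorph0 normr0.
Qed.
Lemma DJ_add J f g : DJ J f -> DJ J g -> DJ J (f + g).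
Proof.
move=> [hf cf] [hg cg]; split => [m|hJ]; first by rewrite pscoefD; exact: (@RJ_add K I a ha_int ha_nz J _ _ (hf m) (hg m)).
apply: M_conv; apply: convM_add; apply: conv_M; [exact: cf|exact: cg].
Qed.
Lemma DJ_opp J f : DJ J f -> DJ J (- f).
Proof.
move=> [hf cf]; split => [m|hJ]; first by rewrite pscoefN; apply: RJ_opp.
apply: M_conv; apply: convM_opp; apply: conv_M; exact: cf.
Qed.
Lemma DJ_mul J f g : DJ J f -> DJ J g -> DJ J (f * g).
Proof.
move=> [hf cf] [hg cg]; split => [m|hJ].
  by rewrite pscoefM; apply: (@RJ_sum K I a ha_int ha_nz) => i; apply: (@RJ_mul K I a ha_nz); [apply: hf|apply: hg].
have e : pscoef (f * g) = fun m => \sum_(i < m.+1) pscoef f i * pscoef g (m - i)%N.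
  by apply: functional_extensionality => m; rewrite pscoefM.
rewrite e; apply: M_conv; apply: convM_mul; apply: conv_M; [exact: cf|exact: cg].
Qed.

Lemma QJ_frac J f : DJ J f -> QJ J (f%:F).
Proof.
move=> hf; exists f, 1; split => //; first exact: DJ_1.
  exact: oner_neq0.
by rewrite tofrac1 divr1.
Qed.

Lemma tofrac_neq0 (g : pseries K) : g != 0 -> g%:F != 0.
Proof. by rewrite tofrac_eq0. Qed.

Lemma QJ_add J x y : QJ J x -> QJ J y -> QJ J (x + y).
Proof.
move=> [f [g [hf hg g0 ->]]] [f' [g' [hf' hg' g0' ->]]].
exists (f * g' + f' * g), (g * g'); split.
- by apply: DJ_add; apply: DJ_mul.
- exact: DJ_mul.
- by rewrite mulf_neq0.
- by rewrite tofracD !tofracM addf_div ?tofrac_neq0.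
Qed.
Lemma QJ_opp J x : QJ J x -> QJ J (- x).
Proof.
move=> [f [g [hf hg g0 ->]]]; exists (- f), g; split => //; first exact: DJ_opp.
by rewrite tofracN mulNr.
Qed.
Lemma QJ_mul J x y : QJ J x -> QJ J y -> QJ J (x * y).
Proof.
move=> [f [g [hf hg g0 ->]]] [f' [g' [hf' hg' g0' ->]]].
exists (f * f'), (g * g'); split.
- exact: DJ_mul.
- exact: DJ_mul.
- by rewrite mulf_neq0.
- by rewrite !tofracM mulf_div.
Qed.
Lemma QJ_inv J x : QJ J x -> QJ J x^-1.
Proof.
move=> [f [g [hf hg g0 ->]]].
have [->|f0] := eqVneq f 0.
  exists 0, 1; split; [exact: DJ_0|exact: DJ_1|exact: oner_neq0|].
  by rewrite tofrac0 !mul0r invr0.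
exists g, f; split => //.
by rewrite invf_div.
Qed.
Lemma QJ_0 J : QJ J 0.
Proof. by rewrite -tofrac0; apply/QJ_frac/DJ_0. Qed.
Lemma QJ_1 J : QJ J 1.
Proof. by rewrite -tofrac1; apply/QJ_frac/DJ_1. Qed.

Lemma QJ_invmx J n (A : 'M[{fraction pseries K}]_n) :
  (forall i j, QJ J (A i j)) -> forall i j, QJ J (invmx A i j).
Proof.
apply: S_invmx; [exact: QJ_0|exact: QJ_1|exact: QJ_opp|exact: QJ_add|exact: QJ_mul|exact: QJ_inv].
Qed.
End Ser.


Section Ev0.
Variable K : fieldType.
Definition ev0 (f : pseries K) : K := pscoef f 0.
Lemma ev0_zmod : zmod_morphism ev0. Proof. by []. Qed.
HB.instance Definition _ := GRing.isZmodMorphism.Build (pseries K) K ev0 ev0_zmod.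
Lemma ev0_monoid : monoid_morphism ev0.
Proof.
split => [//|f g]; rewrite /ev0 pscoefM big_ord1 subnn //.
Qed.
HB.instance Definition _ := GRing.isMonoidMorphism.Build (pseries K) K ev0 ev0_monoid.

Lemma pscoef_sum (T : Type) (r : seq T) (P : pred T) (F : T -> pseries K) m :
  pscoef (\sum_(j <- r | P j) F j) m = \sum_(j <- r | P j) pscoef (F j) m.
Proof.
elim: r => [|x r IH]; first by rewrite !big_nil.
by rewrite !big_cons; case: (P x) => //; rewrite -IH.
Qed.
End Ev0.

Section Main.
Variables (K : fieldExtType rat) (I : finType) (one : I) (a : I -> K).
Hypothesis ha_int : forall i : I, in_ring_of_integers (a i).
Hypothesis ha_nz : forall i : I, a i != 0.
Hypothesis ha_cop : forall i j : I, i != j ->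
       exists r s : K, [/\ in_ring_of_integers r, in_ring_of_integers s &
                           a i * r + a j * s = 1].
Variables (n : nat) (b : 'M[pseries K]_n).
Hypothesis hb : forall r c, in_DJ one a [set: I] (b r c).
Hypothesis hb1 : tabs_mx_lt1 (b - 1%:M).
Variable i : I.

Local Notation RJ := (in_RJ a).
Local Notation RI := (@in_ring_of_integers K).

Definition CC : algC := proj1_sig (constructive_indefinite_description _ (reduce_bound K)).
Lemma CC_ge0 : 0 <= CC.
Proof. by case: (proj2_sig (constructive_indefinite_description _ (reduce_bound K))). Qed.
Lemma CC_spec y : exists w, RI w /\ knorm_le (y - w) CC.
Proof. by case: (proj2_sig (constructive_indefinite_description _ (reduce_bound K))) => _; apply. Qed.

Definition side := i != one.

Definition spl_P (c : K) (uv : K * K) := RJ setT c ->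
  [/\ c = uv.1 + uv.2, RJ [set i] uv.1, RJ [set~ i] uv.2 &
     (if side then knorm_le uv.1 CC else knorm_le uv.2 CC)].

Lemma spl_ex c : exists uv, spl_P c uv.
Proof.
case: (classic (RJ setT c)) => h; last by exists (0, 0).
have [u [v hv]] := @split_RJ K I a ha_int ha_nz ha_cop CC CC_spec i side c h.
by exists (u, v).
Qed.

Definition spl (c : K) : K * K := proj1_sig (constructive_indefinite_description _ (spl_ex c)).
Lemma splP c : spl_P c (spl c).
Proof. exact: (proj2_sig (constructive_indefinite_description _ (spl_ex c))). Qed.

Definition Bm m : 'M[K]_n := \matrix_(r, c) pscoef (b r c) m.

Fixpoint st (m : nat) : (nat -> 'M[K]_n) * (nat -> 'M[K]_n) :=
  match m with
  | 0 => (fun _ => 1%:M, fun _ => 1%:M)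
  | m'.+1 => let gh := st m' in
      let c := Bm m'.+1 - \sum_(1 <= k < m'.+1) gh.1 k *m gh.2 (m'.+1 - k)%N in
      (fun j => if j == m'.+1 then map_mx (fun x => (spl x).1) c else gh.1 j,
       fun j => if j == m'.+1 then map_mx (fun x => (spl x).2) c else gh.2 j)
  end.

Definition G j := (st j).1 j.
Definition H j := (st j).2 j.

Lemma st_stable j m : (j <= m)%N -> (st m).1 j = G j /\ (st m).2 j = H j.
Proof.
elim: m => [|m IH] hj.
  by rewrite leqn0 in hj; move/eqP: hj => ->.
case: (ltngtP j m.+1) hj => // [hjm|->] _; last by [].
have [h1 h2] := IH hjm; rewrite /= ifN ?ifN; [by []| |];
  by rewrite neq_ltn hjm.
Qed.

Definition cm m := Bm m.+1 - \sum_(1 <= k < m.+1) G k *m H (m.+1 - k)%N.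

Lemma GH_rec m : G m.+1 = map_mx (fun x => (spl x).1) (cm m) /\
                 H m.+1 = map_mx (fun x => (spl x).2) (cm m).
Proof.
have e : \sum_(1 <= k < m.+1) (st m).1 k *m (st m).2 (m.+1 - k)%N =
         \sum_(1 <= k < m.+1) G k *m H (m.+1 - k)%N.
  rewrite big_nat_cond [RHS]big_nat_cond; apply: eq_bigr => k /andP[/andP[k1 km] _].
  have [-> _] := @st_stable k m km.
  have hmk : (m.+1 - k <= m)%N by rewrite leq_subLR -addn1 addnC leq_add2r.
  by have [_ ->] := @st_stable (m.+1 - k)%N m hmk.
by rewrite /G /H /= !eqxx /cm -e.
Qed.

Lemma G0 : G 0 = 1%:M. Proof. by []. Qed.
Lemma H0 : H 0 = 1%:M. Proof. by []. Qed.

Lemma RJ_sum' J (T : Type) (r : seq T) (P : pred T) (F : T -> K) :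
  (forall j, P j -> RJ J (F j)) -> RJ J (\sum_(j <- r | P j) F j).
Proof.
move=> hF; apply: big_ind => //; [exact: RJ_0|].
exact: (@RJ_add K I a ha_int ha_nz).
Qed.

Lemma id_RJ J r c : RJ J ((1%:M : 'M[K]_n) r c).
Proof. by rewrite mxE; case: (r == c); [exact: RJ_1|exact: RJ_0]. Qed.

Lemma Bm_RJ m r c : RJ setT (Bm m r c).
Proof. by rewrite mxE; case: (hb r c) => h _; exact: h. Qed.

Lemma GH_RJ m : (forall r c, RJ [set i] (G m r c)) /\ (forall r c, RJ [set~ i] (H m r c)).
Proof.
elim/ltn_ind: m => -[|m] IH; first by rewrite G0 H0; split => r c; apply: id_RJ.
have hc r c : RJ setT (cm m r c).
  rewrite /cm !mxE; apply: (@RJ_add K I a ha_int ha_nz); first by case: (hb r c) => h _; exact: h.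
  apply: RJ_opp; rewrite summxE big_nat_cond; apply: RJ_sum' => k /andP[/andP[k1 km] _].
  rewrite mxE; apply: RJ_sum' => l _; apply: (@RJ_mul K I a ha_nz).
    apply: (@RJ_sub_set K I a ha_int ha_nz [set i]); first exact: subsetT.
    by case: (IH k km).
  apply: (@RJ_sub_set K I a ha_int ha_nz [set~ i]); first exact: subsetT.
  have hmk : (m.+1 - k < m.+1)%N by rewrite ltn_subrL k1.
  by case: (IH _ hmk).
by have [-> ->] := GH_rec m; split => r c; rewrite mxE; case: (@splP _ (hc r c)).
Qed.

Lemma cm_RJ m r c : RJ setT (cm m r c).
Proof.
rewrite /cm !mxE; apply: (@RJ_add K I a ha_int ha_nz); first by case: (hb r c) => h _; exact: h.
apply: RJ_opp; rewrite summxE; apply: RJ_sum' => k _.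
rewrite mxE; apply: RJ_sum' => l _; apply: (@RJ_mul K I a ha_nz).
  apply: (@RJ_sub_set K I a ha_int ha_nz [set i]); first exact: subsetT.
  by case: (GH_RJ k).
apply: (@RJ_sub_set K I a ha_int ha_nz [set~ i]); first exact: subsetT.
by case: (GH_RJ (m.+1 - k)).
Qed.

Lemma id_bound r c : knorm_le ((1%:M : 'M[K]_n) r c) (1 + CC).
Proof.
have h1 : (1 : algC) <= 1 + CC by rewrite lerDl CC_ge0.
move=> s; rewrite mxE rmorphMn rmorph1; apply: le_trans h1.
by case: (r == c); rewrite ?normr0 ?normr1 ?ler01.
Qed.

Lemma GH_bound m r c :
  if side then knorm_le (G m r c) (1 + CC) else knorm_le (H m r c) (1 + CC).
Proof.
case: m => [|m]; first by rewrite G0 H0; case: side; apply: id_bound.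
have h1 : CC <= 1 + CC by rewrite lerDr ler01.
have [-> ->] := GH_rec m.
case: (@splP _ (cm_RJ m r c)) => _ _ _.
by rewrite /knorm_le; case: side => h s; rewrite mxE; apply: le_trans (h s) h1.
Qed.

Lemma Bm0 : Bm 0 = 1%:M.
Proof.
apply/matrixP => r c; have := hb1 r c; rewrite /tabs_lt1 !mxE.
have -> : forall x y : pseries K, pscoef (x - y) 0 = pscoef x 0 - pscoef y 0 by [].
by case: (r == c); rewrite /= ?mulr1n ?mulr0n ?subr0 // => /eqP; rewrite subr_eq0 => /eqP.
Qed.

Lemma gh_spec m : G m.+1 + H m.+1 = cm m.
Proof.
have [-> ->] := GH_rec m; apply/matrixP => r c.
case: (@splP _ (cm_RJ m r c)) => e _ _ _; rewrite [RHS]e.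
by rewrite !mxE.
Qed.

Lemma conv_id m : Bm m = \sum_(k < m.+1) G k *m H (m - k)%N.
Proof.
case: m => [|m]; first by rewrite big_ord1 G0 H0 mul1mx Bm0.
rewrite big_ord_recl big_ord_recr /=.
have hbp k : bump 0 k = k.+1 by rewrite /bump add1n.
rewrite !hbp subn0 subnn G0 H0 mul1mx mulmx1.
have e : \sum_(i0 < m) G (bump 0 i0) *m H (m.+1 - bump 0 i0)%N =
         \sum_(1 <= k < m.+1) G k *m H (m.+1 - k)%N.
  by rewrite big_add1 /= big_mkord; apply: eq_bigr => k _; rewrite hbp.
rewrite e; have h := gh_spec m; rewrite /cm in h.
by rewrite -(subrK (\sum_(1 <= k < m.+1) G k *m H (m.+1 - k)%N) (Bm m.+1)) -h -addrA addrC -addrA.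
Qed.

Definition gM : 'M[pseries K]_n := \matrix_(r, c) PSeries (fun m => G m r c).
Definition hM : 'M[pseries K]_n := \matrix_(r, c) PSeries (fun m => H m r c).

Lemma b_eq : b = gM *m hM.
Proof.
apply/matrixP => r c; apply: ps_ext => m.
have := congr1 (fun M : 'M[K]_n => M r c) (conv_id m); rewrite /= mxE => ->.
rewrite summxE mxE pscoef_sum.
under eq_bigr do rewrite mxE.
rewrite exchange_big /=; apply: eq_bigr => l _.
rewrite -[RHS]/(pscoef (gM r l * hM l c) m) pscoefM.
by apply: eq_bigr => k _; rewrite !mxE.
Qed.

Lemma CC1_ge0 : 0 <= 1 + CC.
Proof. by rewrite addr_ge0 // ?ler01 // CC_ge0. Qed.

Lemma gM_DJ j r c : j != i -> in_DJ one a [set~ j] (gM r c).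
Proof.
move=> ji; split => [m|hj].
  rewrite mxE /=; apply: (@RJ_sub_set K I a ha_int ha_nz [set i]).
    by rewrite sub1set !inE eq_sym.
  by case: (GH_RJ m).
have ej : j = one by apply/eqP; move: hj; rewrite !inE negbK eq_sym.
have hs : side by rewrite /side -ej eq_sym.
apply: (@conv_bounded _ _ (1 + CC) CC1_ge0) => m; rewrite mxE /=.
by have := GH_bound m r c; rewrite hs.
Qed.

Lemma hM_DJ r c : in_DJ one a [set~ i] (hM r c).
Proof.
split => [m|hj]; first by rewrite mxE /=; case: (GH_RJ m).
have ei : i = one by apply/eqP; move: hj; rewrite !inE negbK eq_sym.
have hs : side = false by rewrite /side ei eqxx.
apply: (@conv_bounded _ _ (1 + CC) CC1_ge0) => m; rewrite mxE /=.
by have := GH_bound m r c; rewrite hs.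
Qed.

Lemma det_unit (M : 'M[pseries K]_n) : map_mx (@ev0 K) M = 1%:M ->
  map_mx (fun x => x%:F) M \in unitmx.
Proof.
move=> hM; rewrite unitmxE.
have -> : \det (map_mx (fun x => x%:F) M) = (\det M)%:F by exact: det_map_mx.
rewrite unitfE tofrac_eq0; apply/eqP => h0.
have := det_map_mx (@ev0 K) M; rewrite hM det1 h0 rmorph0 => /eqP.
by rewrite oner_eq0.
Qed.

Theorem main_sec : exists b'i bi : 'M[{fraction pseries K}]_n,
    [/\ in_GL (in_Qi' one a i) b'i, in_GL (in_Qi one a i) bi &
        map_mx (fun x => x%:F) b = b'i *m bi].
Proof.
exists (map_mx (fun x => x%:F) gM), (map_mx (fun x => x%:F) hM); split.
- split.
  + apply: det_unit; apply/matrixP => r c; rewrite !mxE /=.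
    by rewrite /ev0 mxE.
  + move=> r c j ji; rewrite mxE; apply: QJ_frac; exact: gM_DJ.
  + move=> r c j ji; apply: (@QJ_invmx K I one a ha_int ha_nz).
    by move=> r' c'; rewrite mxE; apply: QJ_frac; exact: gM_DJ.
- split.
  + apply: det_unit; apply/matrixP => r c; rewrite !mxE /=.
    by rewrite /ev0 mxE.
  + move=> r c; rewrite mxE; apply: QJ_frac; exact: hM_DJ.
  + apply: (@QJ_invmx K I one a ha_int ha_nz).
    by move=> r' c'; rewrite mxE; apply: QJ_frac; exact: hM_DJ.
- by rewrite {1}b_eq map_mxM.
Qed.
End Main.

Theorem proposition3p4 (K : fieldExtType rat) (I : finType) (one : I) (a : I -> K)
    (ha_int : forall i : I, in_ring_of_integers (a i))
    (ha_nz : forall i : I, a i != 0)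
    (ha_nunit : forall i : I, ~ (exists y : K, in_ring_of_integers y /\ a i * y = 1))
    (ha_cop : forall i j : I, i != j ->
       exists r s : K, [/\ in_ring_of_integers r, in_ring_of_integers s &
                           a i * r + a j * s = 1])
    (n : nat) (b : 'M[pseries K]_n)
    (hb : forall r c, in_DJ one a [set: I] (b r c))
    (hb1 : tabs_mx_lt1 (b - 1%:M)) :
  forall i : I, exists b'i bi : 'M[{fraction pseries K}]_n,
    [/\ in_GL (in_Qi' one a i) b'i, in_GL (in_Qi one a i) bi &
        map_mx (fun x => x%:F) b = b'i *m bi].
Proof. by move=> i; apply: (@main_sec K I one a ha_int ha_nz ha_cop n b hb hb1 i). Qed.
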